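(* Let $0\le q<d$ and let $X,Y$ be cubical sets in $\mathbb{R}^d$ such that the symmetric difference $X\triangle Y$ is bounded. Then there exists $\Delta_\infty\in\mathbb{Z}$ such that for every sequence of boxes $A_n=x_n+[-m_n,m_n]^d$ ($x_n\in\mathbb{Z}^d$, $m_n\in\mathbb{N}$) whose lattice point sets satisfy $\liminf_n (A_n\cap\mathbb{Z}^d)=\mathbb{Z}^d$ (i.e. every $z\in\mathbb{Z}^d$ lies in $A_n$ for all sufficiently large $n$), there exists $n_\infty\in\mathbb{N}$ such that $$\beta_q(X\cap A_n)-\beta_q(Y\cap A_n)=\Delta_\infty\quad\text{for all }n\ge n_\infty.$$
   Context: An elementary interval is $[l,l+1]$ or $[l]=[l,l]$ with $l\in\mathbb{Z}$; an elementary cube in $\mathbb{R}^d$ is a product of $d$ elementary intervals, of dimension equal to the number of nondegenerate factors. A cubical set is a (possibly infinite) union of elementary cubes; the intersection of a cubical set with a box $x+[-m,m]^d$, $x\in\mathbb{Z}^d$, is a bounded cubical set. For a cubical set $X$, $C_k(X)$ is the free $\mathbb{Z}$-module on the $k$-dimensional elementary cubes contained in $X$, with the standard cubical boundary operator $\partial\widehat Q=\sum_{j=1}^k(-1)^{j-1}(\widehat{Q_j^+}-\widehat{Q_j^-})$; $H_k(X)$ is the resulting homology, and for bounded $X$, $\beta_k(X)$ is the rank of the free part of $H_k(X)$. *)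

(* Defs.v *)
From Stdlib Require Import Reals.
From HB Require Import structures.
From mathcomp Require Import all_boot all_order all_algebra.
From mathcomp Require Import Rstruct.
Set Implicit Arguments. Unset Strict Implicit. Unset Printing Implicit Defensive.
Import Order.TTheory GRing.Theory Num.Theory.
Local Open Scope ring_scope.

Definition pt (d : nat) := 'I_d -> R.
Definition rset (d : nat) := pt d -> Prop.

(** Elementary interval [l, l+b] (b = true: nondegenerate [l,l+1]; b = false: [l]). *)
Definition einterval := (int * bool)%type.
Definition intv_pts (I : einterval) (x : R) : Prop :=
  (I.1)%:~R <= x /\ x <= (I.1 + (I.2 : nat)%:Z)%:~R.

Definition ecube (d : nat) := {ffun 'I_d -> einterval}.
Definition cube_pts d (Q : ecube d) : rset d := fun x => forall i, intv_pts (Q i) (x i).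
Definition cube_dim d (Q : ecube d) : nat := #|[set i : 'I_d | (Q i).2]|.

Definition cubical d (X : rset d) : Prop :=
  exists K : ecube d -> Prop, forall x, X x <-> exists Q, K Q /\ cube_pts Q x.

Definition bounded_set d (X : rset d) : Prop :=
  exists M : R, forall x, X x -> forall i, `|x i| <= M.

Definition setI_r d (X Y : rset d) : rset d := fun x => X x /\ Y x.
Definition symdiff d (X Y : rset d) : rset d :=
  fun x => (X x /\ ~ Y x) \/ (Y x /\ ~ X x).

Definition box d (x : 'I_d -> int) (m : nat) : rset d :=
  fun p => forall i, (x i - m%:Z)%:~R <= p i /\ p i <= (x i + m%:Z)%:~R.
Definition lattice_pt d (z : 'I_d -> int) : pt d := fun i => (z i)%:~R.

(** Chains: finite formal Z-linear combinations of elementary cubes. *)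
Definition chain d := seq (int * ecube d).
Definition coef d (c : chain d) (P : ecube d) : int :=
  \sum_(p <- c | p.2 == P) p.1.

Definition face d (Q : ecube d) (i : 'I_d) (up : bool) : ecube d :=
  [ffun t => if t == i then ((Q i).1 + (up : nat)%:Z, false) else Q t].
(** Position (0-based) of coordinate i among the nondegenerate factors. *)
Definition nd_before d (Q : ecube d) (i : 'I_d) : nat :=
  #|[set t : 'I_d | (nat_of_ord t < nat_of_ord i)%N && (Q t).2]|.
(** Cubical boundary of an elementary cube:
    sum_j (-1)^(j-1) (Q_j^+ - Q_j^-). *)
Definition cube_bd d (Q : ecube d) : chain d :=
  flatten [seq (if (Q i).2 then
                 [:: ((-1) ^+ nd_before Q i, face Q i true);
                     (- (-1) ^+ nd_before Q i, face Q i false)]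
               else [::]) | i <- enum 'I_d].
Definition bd d (c : chain d) : chain d :=
  flatten [seq [seq (p.1 * s.1, s.2) | s <- cube_bd p.2] | p <- c].

Definition is_chain d (X : rset d) (k : nat) (c : chain d) : Prop :=
  forall p, p \in c -> cube_dim p.2 = k /\ (forall x, cube_pts p.2 x -> X x).
Definition is_cycle d (X : rset d) (k : nat) (z : chain d) : Prop :=
  is_chain X k z /\ forall P, coef (bd z) P = 0.
Definition is_boundary d (X : rset d) (k : nat) (c : chain d) : Prop :=
  exists b, is_chain X k.+1 b /\ forall P, coef c P = coef (bd b) P.

Definition lincomb d (cs : seq int) (zs : seq (chain d)) : chain d :=
  flatten [seq [seq (cz.1 * p.1, p.2) | p <- cz.2] | cz <- zip cs zs].

Definition indep_hom d (X : rset d) (k : nat) (zs : seq (chain d)) : Prop :=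
  (forall z, z \in zs -> is_cycle X k z) /\
  forall cs : seq int, size cs = size zs ->
    is_boundary X k (lincomb cs zs) -> forall c, c \in cs -> c = 0.

(** r = beta_k(X), the rank of (the free part of) H_k(X):
    the maximal number of Z-independent homology classes. *)
Definition is_betti d (X : rset d) (k : nat) (r : nat) : Prop :=
  (exists zs, size zs = r /\ indep_hom X k zs) /\
  (forall zs, indep_hom X k zs -> (size zs <= r)%N).

(* Main.v *)
Require Import Defs.
From Stdlib Require Import Reals ClassicalEpsilon.
From HB Require Import structures.
From mathcomp Require Import all_boot all_order all_algebra.
From mathcomp Require Import Rstruct.
From mathcomp Require Import ring zify lra.
Set Implicit Arguments. Unset Strict Implicit. Unset Printing Implicit Defensive.
Import Order.TTheory GRing.Theory Num.Theory.
Local Open Scope ring_scope.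
Lemma coef_nil d P : coef (([::] : chain d)) P = 0.
Proof. by rewrite /coef big_nil. Qed.

Lemma coef_cons d (p : int * ecube d) c P :
  coef (p :: c) P = (if p.2 == P then p.1 else 0) + coef c P.
Proof. by rewrite /coef big_cons; case: ifP; rewrite ?add0r. Qed.

Lemma coef_cat d (c1 c2 : chain d) P : coef (c1 ++ c2) P = coef c1 P + coef c2 P.
Proof. by rewrite /coef big_cat. Qed.

Lemma coef_flatten d (cs : seq (chain d)) P :
  coef (flatten cs) P = \sum_(c <- cs) coef c P.
Proof. by rewrite /coef big_flatten. Qed.

Lemma coef_scale d (a : int) (c : chain d) P :
  coef [seq (a * p.1, p.2) | p <- c] P = a * coef c P.
Proof. by rewrite /coef big_map /= mulr_sumr. Qed.

Lemma coef_bd d (c : chain d) P :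
  coef (bd c) P = \sum_(p <- c) p.1 * coef (cube_bd p.2) P.
Proof.
rewrite /bd coef_flatten big_map; apply: eq_bigr => p _; exact: coef_scale.
Qed.

Definition sgn d (R : ecube d) i (u : bool) : int :=
  (if u then 1 else -1) * (-1) ^+ nd_before R i.

Lemma sum_cube_bd d (Q : ecube d) (F : int * ecube d -> int) :
  \sum_(p <- cube_bd Q) F p =
  \sum_(i < d) \sum_(u : bool) (if (Q i).2 then F (sgn Q i u, face Q i u) else 0).
Proof.
rewrite /cube_bd big_flatten big_map big_enum /=; apply: eq_bigr => i _.
rewrite big_bool /=; case: ((Q i).2); last by rewrite big_nil addr0.
by rewrite big_cons big_cons big_nil addr0 /sgn mul1r mulN1r.
Qed.

Lemma coef_cube_bd d (Q P : ecube d) :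
  coef (cube_bd Q) P = \sum_(i < d) \sum_(u : bool)
    (if (Q i).2 then (if face Q i u == P then sgn Q i u else 0) else 0).
Proof. by rewrite /coef big_mkcond /= sum_cube_bd. Qed.

Lemma face_nd d (Q : ecube d) i u t : (face Q i u t).2 = (t != i) && (Q t).2.
Proof. by rewrite /face ffunE; case: (t == i). Qed.

Lemma face_face d (Q : ecube d) i j u v : i != j ->
  face (face Q i u) j v = face (face Q j v) i u.
Proof.
move=> ij; apply/ffunP => t; rewrite /face !ffunE.
case: (eqVneq t i) => [ti|ti]; case: (eqVneq t j) => [tj|tj] //.
- by subst; rewrite eqxx in ij.
- by rewrite (negbTE ij).
- by rewrite eq_sym (negbTE ij).
Qed.

Lemma nb_face d (Q : ecube d) i j u : i != j -> (Q i).2 ->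
  nd_before Q j = (nd_before (face Q i u) j + (i < j)%N)%N.
Proof.
move=> ij Qi; rewrite /nd_before (cardsD1 i) inE Qi andbT addnC; congr (_ + _)%N.
apply: eq_card => t; rewrite !inE face_nd.
by case: (t == i); rewrite ?andbF.
Qed.
Lemma bdbd_cube d (Q P : ecube d) : coef (bd (cube_bd Q)) P = 0.
Proof.
rewrite coef_bd (sum_cube_bd Q (fun p => p.1 * coef (cube_bd p.2) P)) /=.
pose T := fun (a b : 'I_d * bool) => if (Q a.1).2 then sgn Q a.1 a.2 *
  (if (face Q a.1 a.2 b.1).2 then (if face (face Q a.1 a.2) b.1 b.2 == P
   then sgn (face Q a.1 a.2) b.1 b.2 else 0) else 0) else 0.
have -> : \sum_(i < d) \sum_(u : bool) (if (Q i).2 then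
    sgn Q i u * coef (cube_bd (face Q i u)) P else 0) = \sum_a \sum_b T a b.
  rewrite pair_bigA /=; apply: eq_bigr => [[i u]] _ /=; rewrite /T /=.
  case: ((Q i).2); last by rewrite big1.
  rewrite coef_cube_bd pair_bigA mulr_sumr /=; apply: eq_bigr => [[j v]] _ /=.
  by case: ((face Q i u j).2); rewrite ?mulr0.
have Tanti : forall a b, T a b = - T b a.
  move=> [i u] [j v]; rewrite /T /= !face_nd.
  case: (eqVneq j i) => [->|ji]; first by rewrite /=; case: ifP; rewrite ?mulr0 ?oppr0.
  have ij : i != j by rewrite eq_sym.
  rewrite /=.
  case Qi: ((Q i).2); case Qj: ((Q j).2); rewrite /= ?mulr0 ?oppr0 //.
  rewrite face_face //; case: eqP => _; last by rewrite !mulr0 oppr0.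
  rewrite /sgn (nb_face u ij Qi) (nb_face v ji Qj).
  set a := nd_before (face Q i u) j; set b := nd_before (face Q j v) i.
  case: (ltngtP i j) => h; last by case/negP: ij; apply/eqP/val_inj.
  - rewrite addn0 addn1 exprS; ring.
  - rewrite addn0 addn1 exprS; ring.
set S := \sum_a \sum_b T a b.
have hS : S = - S.
  rewrite {1}/S exchange_big /=.
  under eq_bigr => b _ do under eq_bigr => a _ do rewrite Tanti.
  by rewrite /S -sumrN; apply: eq_bigr => b _; rewrite sumrN.
lia.
Qed.
Lemma coef_cube_bd_face d (Q P : ecube d) : coef (cube_bd Q) P != 0 ->
  exists i u, (Q i).2 /\ P = face Q i u.
Proof.
move=> h; apply/not_all_not_ex => hn; move/eqP: h; apply.
rewrite coef_cube_bd big1 // => i _; rewrite big1 // => u _.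
case Qi: ((Q i).2) => //; case: eqP => // e.
by case: (hn i); exists u; split.
Qed.

Lemma face_sub d (Q : ecube d) i u x : (Q i).2 -> cube_pts (face Q i u) x -> cube_pts Q x.
Proof.
move=> Qi hx t; move: (hx t) => {hx}; rewrite /face /intv_pts ffunE.
case: (eqVneq t i) => [->|_] //= [h1 h2]; rewrite Qi; split.
- apply: le_trans h1; rewrite ler_int; case: (u) => /=; lia.
- apply: (le_trans h2); rewrite ler_int; case: (u) => /=; lia.
Qed.

Lemma face_dim d (Q : ecube d) i u : (Q i).2 -> cube_dim Q = (cube_dim (face Q i u)).+1.
Proof.
move=> Qi; rewrite /cube_dim (cardsD1 i) inE Qi add1n; congr (_.+1).
apply: eq_card => t; rewrite !inE face_nd; by case: (t == i).
Qed.

Definition pb (P : Prop) : bool := if excluded_middle_informative P then true else false.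
Lemma pbP (P : Prop) : reflect P (pb P).
Proof. rewrite /pb; case: excluded_middle_informative => h; by constructor. Qed.

Definition Q0 d : ecube d := [ffun => (0%R, false)].
Definition cu d (U : seq (ecube d)) (i : 'I_(size U)) : ecube d := nth (Q0 d) U i.
Arguments cu {d} U i.
Definition vec d (U : seq (ecube d)) (c : chain d) : 'rV[rat]_(size U) :=
  \row_(j < size U) (coef c (cu U j))%:~R.
Definition Dm d (U : seq (ecube d)) : 'M[rat]_(size U) :=
  \matrix_(i < size U, j < size U) (coef (cube_bd (cu U i)) (cu U j))%:~R.

Lemma cu_mem d (U : seq (ecube d)) j : cu U j \in U.
Proof. exact: mem_nth. Qed.

Lemma cu_inj d (U : seq (ecube d)) : uniq U -> injective (cu U).
Proof. move=> uU i j /eqP; rewrite /cu nth_uniq // => /eqP; exact: val_inj. Qed.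

Lemma cu_surj d (U : seq (ecube d)) Q : Q \in U -> exists j, cu U j = Q.
Proof.
move=> QU; have lt : (index Q U < size U)%N by rewrite index_mem.
by exists (Ordinal lt); exact: nth_index.
Qed.

Lemma sum_chain d (U : seq (ecube d)) (c : chain d) (h : ecube d -> rat) :
  uniq U -> (forall p, p \in c -> p.2 \in U) ->
  \sum_(p <- c) (p.1)%:~R * h p.2 = \sum_j (coef c (cu U j))%:~R * h (cu U j).
Proof.
move=> uU; elim: c => [|p c IH] hc.
  by rewrite big_nil big1 // => j _; rewrite coef_nil mul0r.
rewrite big_cons IH; last by move=> x xc; apply: hc; rewrite inE xc orbT.
rewrite [RHS](eq_bigr (fun j => (if p.2 == cu U j then p.1 else 0)%:~R * h (cu U j)
   + (coef c (cu U j))%:~R * h (cu U j))); last first.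
  by move=> j _; rewrite coef_cons intrD mulrDl.
rewrite big_split /=; congr (_ + _).
have [j0 hj0] := cu_surj (hc p (mem_head _ _)).
rewrite (bigD1 j0) //= hj0 eqxx big1 ?addr0 // => j jj0.
case: eqP => e; last by rewrite mul0r.
by move: jj0; rewrite -hj0 in e; rewrite (cu_inj uU e) eqxx.
Qed.

Lemma vec_bd d (U : seq (ecube d)) (c : chain d) : uniq U ->
  (forall p, p \in c -> p.2 \in U) -> vec U (bd c) = vec U c *m Dm U.
Proof.
move=> uU hc; apply/rowP => j; rewrite !mxE coef_bd.
rewrite rmorph_sum /=.
under eq_bigr => p _ do rewrite intrM.
rewrite (sum_chain (fun Q => (coef (cube_bd Q) (cu U j))%:~R) uU hc).
by apply: eq_bigr => i _; rewrite !mxE.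
Qed.

Lemma coef_out d (U : seq (ecube d)) (c : chain d) P :
  (forall p, p \in c -> p.2 \in U) -> P \notin U -> coef c P = 0.
Proof.
move=> hc PU; rewrite /coef big1_seq // => p /andP [/eqP e pc].
by move: (hc p pc); rewrite e (negbTE PU).
Qed.

Lemma integerize n (v : 'rV[rat]_n) :
  exists k : int, 0 < k /\ exists z : 'I_n -> int, forall j, k%:~R * v 0 j = (z j)%:~R.
Proof.
exists (\prod_j denq (v 0 j)); split.
  by apply: prodr_gt0 => j _; exact: denq_gt0.
exists (fun j => numq (v 0 j) * \prod_(i | i != j) denq (v 0 i)) => j.
rewrite (bigD1 j) //= !intrM numqE; ring.
Qed.
Definition Cm n (p : pred 'I_n) : 'M[rat]_n := \matrix_(i, j) ((i == j) && p i)%:R.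

Lemma mul_cm n (p : pred 'I_n) (w : 'rV[rat]_n) j : (w *m Cm p) 0 j = w 0 j * (p j)%:R.
Proof.
rewrite !mxE (bigD1 j) //= big1 ?addr0; first by rewrite mxE eqxx.
by move=> i ij; rewrite mxE (negbTE ij) mulr0.
Qed.

Lemma cm_subP n (p : pred 'I_n) (v : 'rV[rat]_n) :
  reflect (forall j, ~~ p j -> v 0 j = 0) (v <= Cm p)%MS.
Proof.
apply: (iffP idP).
  by move=> /submxP [w ->] j pj; rewrite mul_cm (negbTE pj) mulr0.
move=> h; have -> : v = v *m Cm p.
  apply/rowP => j; rewrite mul_cm; case pj: (p j); first by rewrite mulr1.
  by rewrite mulr0 h ?pj.
exact: submxMl.
Qed.

Lemma row_cm n (p : pred 'I_n) i j : row i (Cm p) 0 j = ((i == j) && p i)%:R.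
Proof. by rewrite !mxE. Qed.

Lemma cmS n (p p' : pred 'I_n) : (forall j, p j -> p' j) -> (Cm p <= Cm p')%MS.
Proof.
move=> h; apply/row_subP => i; apply/cm_subP => j pj; rewrite row_cm.
case: eqP => //= ->; case pi: (p j) => //.
by move: pj; rewrite h.
Qed.

Lemma vec_sub d (U : seq (ecube d)) (c : chain d) (p : pred 'I_(size U)) :
  (forall x, x \in c -> forall j, cu U j = x.2 -> p j) -> (vec U c <= Cm p)%MS.
Proof.
move=> h; apply/cm_subP => j pj; rewrite mxE /coef big1_seq //.
by move=> x /andP [/eqP e xc]; move: pj; rewrite (h x xc j (esym e)).
Qed.

Definition chain_of d (U : seq (ecube d)) (p : pred 'I_(size U)) (z : 'I_(size U) -> int)
  : chain d := map (fun i => (z i, cu U i)) (filter p (enum 'I_(size U))).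
Arguments chain_of {d} U p z.

Lemma coef_chain_of d (U : seq (ecube d)) p z j : uniq U ->
  coef (chain_of U p z) (cu U j) = if p j then z j else 0.
Proof.
move=> uU; rewrite /coef /chain_of big_map big_filter_cond big_enum_cond /=.
rewrite (eq_bigl (fun i => p j && (i == j))); last first.
  move=> i; rewrite ?inE /=; apply/idP/idP.
    by move=> /andP [pi /eqP e]; have ej := cu_inj uU e; rewrite -ej pi eqxx.
  by move=> /andP [pj /eqP ->]; rewrite pj eqxx.
case: (p j); last by rewrite big_pred0.
by rewrite big_pred1_eq.
Qed.

Lemma mem_chain_of d (U : seq (ecube d)) p z x :
  x \in chain_of U p z -> exists i, p i /\ x = (z i, cu U i).
Proof.
by move=> /mapP [i]; rewrite mem_filter => /andP [pi _] ->; exists i.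
Qed.

Lemma chain_of_in d (U : seq (ecube d)) p z x : x \in chain_of U p z -> x.2 \in U.
Proof. by move=> /mem_chain_of [i [_ ->]]; exact: cu_mem. Qed.

Lemma vec_chain_of d (U : seq (ecube d)) p z : uniq U ->
  vec U (chain_of U p z) = \row_j (if p j then z j else 0)%:~R.
Proof. by move=> uU; apply/rowP => j; rewrite !mxE coef_chain_of. Qed.

Lemma sum_zip (T : Type) (cs : seq int) (zs : seq T) (z0 : T) (f : int * T -> rat) :
  size cs = size zs ->
  \sum_(cz <- zip cs zs) f cz = \sum_(k < size zs) f (nth 0 cs k, nth z0 zs k).
Proof.
elim: zs cs => [|z zs IH] [|c cs] //= h.
  by rewrite big_nil big_ord0.
by rewrite big_cons big_ord_recl IH //; case: h.
Qed.

Lemma sum_zip_int (T : Type) (cs : seq int) (zs : seq T) (z0 : T) (f : int * T -> int) :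
  size cs = size zs ->
  \sum_(cz <- zip cs zs) f cz = \sum_(k < size zs) f (nth 0 cs k, nth z0 zs k).
Proof.
elim: zs cs => [|z zs IH] [|c cs] //= h.
  by rewrite big_nil big_ord0.
by rewrite big_cons big_ord_recl IH //; case: h.
Qed.

Lemma coef_lincomb d (cs : seq int) (zs : seq (chain d)) P : size cs = size zs ->
  coef (lincomb cs zs) P = \sum_(k < size zs) nth 0 cs k * coef (nth [::] zs k) P.
Proof.
move=> h; rewrite /lincomb coef_flatten big_map.
rewrite (sum_zip_int [::] (fun cz => coef [seq (cz.1 * p.1, p.2) | p <- cz.2] P) h).
by apply: eq_bigr => k _; rewrite coef_scale.
Qed.

Lemma vec_lincomb d (U : seq (ecube d)) (cs : seq int) (zs : seq (chain d)) :
  size cs = size zs ->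
  vec U (lincomb cs zs) = \sum_(k < size zs) (nth 0 cs k)%:~R *: vec U (nth [::] zs k).
Proof.
move=> h; apply/rowP => j; rewrite mxE coef_lincomb // summxE rmorph_sum /=.
by apply: eq_bigr => k _; rewrite !mxE intrM.
Qed.
Definition inS d (S : rset d) (Q : ecube d) : Prop := forall x, cube_pts Q x -> S x.
Definition prS d (U : seq (ecube d)) (S : rset d) (k : nat) : pred 'I_(size U) :=
  fun j => pb (inS S (cu U j) /\ cube_dim (cu U j) = k).
Arguments prS {d} U S k.
Definition Zm d (U : seq (ecube d)) (p : pred 'I_(size U)) := (Cm p :&: kermx (Dm U))%MS.
Definition Bm d (U : seq (ecube d)) (p : pred 'I_(size U)) := Cm p *m Dm U.
Arguments Zm {d} U p.
Arguments Bm {d} U p.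
Definition betv d (U : seq (ecube d)) (S : rset d) q :=
  (\rank (Zm U (prS U S q)) - \rank (Zm U (prS U S q) :&: Bm U (prS U S q.+1)))%N.

Lemma chain_inU d (U : seq (ecube d)) (S : rset d) k c :
  (forall Q, inS S Q -> Q \in U) -> is_chain S k c -> forall p, p \in c -> p.2 \in U.
Proof. by move=> hU hc p pc; apply: hU => x; exact: (proj2 (hc p pc)). Qed.

Lemma coef_bd_out d (U : seq (ecube d)) (S : rset d) (c : chain d) P :
  (forall Q, inS S Q -> Q \in U) -> (forall p, p \in c -> inS S p.2) -> P \notin U ->
  coef (bd c) P = 0.
Proof.
move=> hU hc PU; rewrite coef_bd big1_seq // => p /andP [_ pc].
case: (eqVneq (coef (cube_bd p.2) P) 0) => [-> | h]; first by rewrite mulr0.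
have [i [u [Qi e]]] := coef_cube_bd_face h.
have : P \in U by apply: hU; rewrite e => x hx; apply: (hc p pc); exact: face_sub hx.
by rewrite (negbTE PU).
Qed.

Lemma chain_vec_sub d (U : seq (ecube d)) (S : rset d) k c :
  is_chain S k c -> (vec U c <= Cm (prS U S k))%MS.
Proof.
move=> hc; apply: vec_sub => x xc j e; apply/pbP; rewrite e.
by have [h1 h2] := hc x xc; split.
Qed.

Lemma coef_eq_of_vec d (U : seq (ecube d)) (c1 c2 : chain d) : uniq U ->
  (forall P, P \notin U -> coef c1 P = 0) -> (forall P, P \notin U -> coef c2 P = 0) ->
  vec U c1 = vec U c2 -> forall P, coef c1 P = coef c2 P.
Proof.
move=> uU h1 h2 e P; case PU: (P \in U); last by rewrite h1 ?h2 ?PU.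
have [j <-] := cu_surj PU.
have := congr1 (fun v : 'rV[rat]_(size U) => v 0 j) e; rewrite /= !mxE; exact: intr_inj.
Qed.

Lemma sum_ord_eq m n (e : m = n) (F : nat -> int) :
  \sum_(k < m) F k = \sum_(k < n) F k.
Proof. by rewrite e. Qed.

Lemma coef_lincomb_ord d n (cs : seq int) (zf : 'I_n -> chain d) P : size cs = n ->
  coef (lincomb cs [seq zf k | k <- enum 'I_n]) P = \sum_(k < n) nth 0 cs k * coef (zf k) P.
Proof.
move=> h; have hs : size [seq zf k | k <- enum 'I_n] = n by rewrite size_map size_enum_ord.
rewrite coef_lincomb ?hs //.
apply: eq_bigr => k _.
by rewrite (nth_map k) ?size_enum_ord // nth_ord_enum.
Qed.

Lemma vec_lincomb_ord d (U : seq (ecube d)) n (cs : seq int) (zf : 'I_n -> chain d) :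
  size cs = n ->
  vec U (lincomb cs [seq zf k | k <- enum 'I_n]) = \sum_(k < n) (nth 0 cs k)%:~R *: vec U (zf k).
Proof.
move=> h; apply/rowP => j; rewrite mxE coef_lincomb_ord // summxE rmorph_sum /=.
by apply: eq_bigr => k _; rewrite !mxE intrM.
Qed.
Theorem betti_rank d (U : seq (ecube d)) (S : rset d) q :
  uniq U -> (forall Q, inS S Q -> Q \in U) -> is_betti S q (betv U S q).
Proof.
move=> uU hU.
set p := prS U S q; set p' := prS U S q.+1.
set Z := Zm U p; set B := Bm U p'.
have inSchain : forall (z : 'I_(size U) -> int) k x, x \in chain_of U (prS U S k) z ->
    cube_dim x.2 = k /\ inS S x.2.
  by move=> z k x /mem_chain_of [i [/pbP [h1 h2] ->]].
split.
- set H := (Z :\: B)%MS.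
  have rH : betv U S q = \rank H.
    by rewrite /betv -/p -/p' -/Z -/B -(mxrank_cap_compl Z B) addKn.
  rewrite rH.
  set R := row_base H.
  have hint : forall k : 'I_(\rank H), exists kz : int * ('I_(size U) -> int),
      0 < kz.1 /\ forall j, (kz.1)%:~R * row k R 0 j = (kz.2 j)%:~R.
    by move=> k; have [kk [kp [z hz]]] := integerize (row k R); exists (kk, z).
  pose kz k := proj1_sig (constructive_indefinite_description _ (hint k)).
  have hkz : forall k, 0 < (kz k).1 /\ forall j, ((kz k).1)%:~R * row k R 0 j = ((kz k).2 j)%:~R.
    by move=> k; exact: (proj2_sig (constructive_indefinite_description _ (hint k))).
  pose zk k := chain_of U p (kz k).2.
  have RZ : (R <= Z)%MS by rewrite eq_row_base; exact: diffmxSl.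
  have rowZ k : (row k R <= Z)%MS := submx_trans (row_sub k R) RZ.
  have rowC k : (row k R <= Cm p)%MS := submx_trans (rowZ k) (capmxSl _ _).
  have vzk k : vec U (zk k) = ((kz k).1)%:~R *: row k R.
    have := hkz k; have := rowC k; set r := row k R => rC [_ hr].
    rewrite vec_chain_of //; apply/rowP => j; rewrite [LHS]mxE [RHS]mxE.
    case pj: (p j); first by rewrite -hr.
    by move/cm_subP: rC => /(_ j); rewrite pj => /(_ isT) ->; rewrite mulr0.
  exists [seq zk k | k <- enum 'I_(\rank H)]; split.
    by rewrite size_map size_enum_ord.
  split.
  + move=> z /mapP [k _ ->]; split.
      by move=> x /inSchain [h1 h2]; split.
    move=> P; case PU: (P \in U); last first.
      by apply: (coef_bd_out hU _ (negbT PU)) => x /inSchain [].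
    have [j <-] := cu_surj PU.
    have e : vec U (bd (zk k)) = 0.
      rewrite vec_bd //; last by move=> x /chain_of_in.
      rewrite vzk -scalemxAl.
      have /sub_kermxP -> : (row k R <= kermx (Dm U))%MS := submx_trans (rowZ k) (capmxSr _ _).
      by rewrite scaler0.
    have := congr1 (fun v : 'rV[rat]_(size U) => v 0 j) e; rewrite /= !mxE.
    by move/eqP; rewrite intr_eq0 => /eqP.
  + move=> cs hcs [b [hb hbd]] c cin.
    have hcs' : size cs = \rank H by rewrite hcs size_map size_enum_ord.
    pose w := \row_(k < \rank H) ((nth 0 cs k) * (kz k).1)%:~R : 'rV[rat]_(\rank H).
    have e1 : vec U (lincomb cs [seq zk k | k <- enum 'I_(\rank H)]) = w *m R.
      rewrite vec_lincomb_ord // mulmx_sum_row; apply: eq_bigr => k _.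
      by rewrite vzk scalerA !mxE intrM.
    have e2 : vec U (lincomb cs [seq zk k | k <- enum 'I_(\rank H)]) = vec U b *m Dm U.
      rewrite -vec_bd //; last exact: (chain_inU hU hb).
      by apply/rowP => j; rewrite !mxE hbd.
    have wB : (w *m R <= B)%MS.
      by rewrite -e1 e2; apply: submxMr; exact: chain_vec_sub hb.
    have wH : (w *m R <= H)%MS by rewrite -(eq_row_base H); exact: submxMl.
    have w0 : w *m R = 0.
      apply/eqP; rewrite -submx0 -(capmx_diff Z B) sub_capmx; apply/andP; split => //.
    have w00 : w = 0.
      apply: (row_free_inj (row_base_free H)); by rewrite w0 mul0mx.
    have [k kc <-] := nthP 0 cin.
    have kH : (k < \rank H)%N by rewrite -hcs'.
    have := congr1 (fun v : 'rV[rat]_(\rank H) => v 0 (Ordinal kH)) w00.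
    rewrite /= !mxE => /eqP; rewrite intr_eq0 mulf_eq0 => /orP [/eqP //|].
    by have := proj1 (hkz (Ordinal kH)); rewrite lt0r => /andP [/negbTE ->].
- move=> zs [hcyc hind].
  set s := size zs.
  pose M := \matrix_(k < s, j < size U) vec U (nth [::] zs k) 0 j.
  have rowM k : row k M = vec U (nth [::] zs k) by apply/rowP => j; rewrite !mxE.
  have zin (k : 'I_s) : nth [::] zs k \in zs := mem_nth _ (ltn_ord k).
  have MZ : (M <= Z)%MS.
    apply/row_subP => k; rewrite rowM sub_capmx; apply/andP; split.
      exact: chain_vec_sub (proj1 (hcyc _ (zin k))).
    apply/sub_kermxP; rewrite -vec_bd //; last exact: (chain_inU hU (proj1 (hcyc _ (zin k)))).
    by apply/rowP => j; rewrite !mxE (proj2 (hcyc _ (zin k))).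
  have key : forall w : 'rV_s, (w *m M <= B)%MS -> w = 0.
    move=> w hw.
    have [k1 [k1p [w' hw']]] := integerize w.
    pose W := \row_(k < s) ((w' k)%:~R : rat).
    have eW : W = k1%:~R *: w by apply/rowP => k; rewrite !mxE hw'.
    have hW : (W *m M <= B)%MS by rewrite eW -scalemxAl scalemx_sub.
    have [u hu] := submxP hW.
    pose y := u *m Cm p'.
    have [k2 [k2p [yz hyz]]] := integerize y.
    have ysub : (y <= Cm p')%MS := submxMl _ _.
    pose b := chain_of U p' yz.
    have vb : vec U b = k2%:~R *: y.
      rewrite vec_chain_of //; apply/rowP => j; rewrite [LHS]mxE [RHS]mxE; case pj: (p' j).
        by rewrite -hyz.
      by move/cm_subP: ysub => /(_ j); rewrite pj => /(_ isT) ->; rewrite mulr0.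
    pose cs := [seq k2 * w' k | k <- enum 'I_s].
    have hcs : size cs = s by rewrite size_map size_enum_ord.
    have nthcs (k : 'I_s) : nth 0 cs k = k2 * w' k.
      by rewrite (nth_map k) ?size_enum_ord // nth_ord_enum.
    have hb : is_chain S q.+1 b by move=> x /inSchain [h1 h2]; split.
    have bd_eq : forall P, coef (lincomb cs zs) P = coef (bd b) P.
      apply: (coef_eq_of_vec uU).
      - move=> P PU; rewrite coef_lincomb // big1 // => k _.
        by rewrite (coef_out (chain_inU hU (proj1 (hcyc _ (zin k))))) // mulr0.
      - by move=> P PU; apply: (coef_bd_out hU _ PU) => x /inSchain [].
      - have -> : vec U (bd b) = vec U b *m Dm U by apply: (vec_bd uU) => x0 /chain_of_in.
        rewrite vb -scalemxAl /y -mulmxA -/(Bm U p') -/B -hu.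
        rewrite vec_lincomb // scalemxAl mulmx_sum_row.
        by apply: eq_bigr => k _; rewrite nthcs rowM; congr (_ *: _); rewrite !mxE intrM.
    have hz := hind cs hcs (ex_intro _ b (conj hb bd_eq)).
    apply/rowP => k; rewrite mxE.
    have : k2 * w' k = 0 by rewrite -nthcs; apply: hz; rewrite mem_nth // hcs.
    move/eqP; rewrite mulf_eq0 => /orP [/eqP k20|/eqP w'0].
      by move: k2p; rewrite k20 ltxx.
    have := hw' k; rewrite w'0 => /eqP; rewrite mulf_eq0 => /orP [|/eqP //].
    by rewrite intr_eq0 => /eqP k10; move: k1p; rewrite k10 ltxx.
  have Mfree : row_free M.
    rewrite -kermx_eq0; apply/eqP/row_matrixP => i; rewrite row0; apply: key.
    by rewrite -row_mul mulmx_ker row0 sub0mx.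
  have cap0 : \rank (M :&: (Z :&: B))%MS = 0%N.
    apply/eqP; rewrite mxrank_eq0; apply/eqP/row_matrixP => i; rewrite row0.
    have := row_sub i (M :&: (Z :&: B))%MS; rewrite !sub_capmx => /and3P [hM _ hB].
    have [w ew] := submxP hM; by rewrite ew (key w) ?mul0mx // -ew.
  have := mxrank_sum_cap M (Z :&: B)%MS; rewrite cap0 addn0.
  have : (\rank (M + (Z :&: B))%MS <= \rank Z)%N.
    by apply: mxrankS; rewrite addsmx_sub MZ capmxSl.
  move/eqP: Mfree; rewrite /betv -/p -/p' -/Z -/B /s; lia.
Qed.
Lemma betti_uniq d (S : rset d) q r r' : is_betti S q r -> is_betti S q r' -> r = r'.
Proof.
move=> [[zs [hs hz]] h] [[zs' [hs' hz']] h'].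
apply/eqP; rewrite eqn_leq; apply/andP; split; [rewrite -hs; exact: h' | rewrite -hs'; exact: h].
Qed.

Lemma row_cm_mul n m (p : pred 'I_n) (A : 'M[rat]_(n, m)) i :
  row i (Cm p) *m A = (p i)%:R *: row i A.
Proof.
apply/rowP => j; rewrite !mxE (bigD1 i) //= big1 ?addr0; first by rewrite !mxE eqxx.
by move=> k ki; rewrite !mxE eq_sym (negbTE ki) mul0r.
Qed.

Lemma mem_cube_bd d (Q : ecube d) x : x \in cube_bd Q ->
  exists i u, (Q i).2 /\ x.2 = face Q i u.
Proof.
move/flattenP => [s /mapP [i _ ->]]; case Qi: ((Q i).2) => //.
by rewrite !inE => /orP [] /eqP ->; [exists i, true | exists i, false].
Qed.

Lemma BZ d (U : seq (ecube d)) (S : rset d) q : uniq U ->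
  (forall Q, inS S Q -> Q \in U) -> (Bm U (prS U S q.+1) <= Zm U (prS U S q))%MS.
Proof.
move=> uU hU; apply/row_subP => i; rewrite /Bm row_mul row_cm_mul.
case si: (prS U S q.+1 i); last by rewrite scale0r sub0mx.
move/pbP: si => [hS hd]; rewrite scale1r.
have facesS : forall x, x \in cube_bd (cu U i) -> inS S x.2.
  move=> x /mem_cube_bd [k [u [Qk ->]]] y hy; apply: hS; exact: face_sub hy.
have -> : row i (Dm U) = vec U (cube_bd (cu U i)) by apply/rowP => j; rewrite !mxE.
rewrite sub_capmx; apply/andP; split.
  apply: vec_sub => x xc j e; apply/pbP; rewrite e; split; first exact: facesS.
  have [k [u [Qk ->]]] := mem_cube_bd xc.
  by have := face_dim u Qk; rewrite hd => -[].
apply/sub_kermxP; rewrite -vec_bd //; last by move=> x /facesS; exact: hU.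
by apply/rowP => j; rewrite !mxE bdbd_cube.
Qed.

Lemma rank_by_rows n m1 m2 (A : 'M[rat]_(m1, n)) (B : 'M[rat]_(m2, n)) :
  (forall v : 'rV_n, (v <= A)%MS = (v <= B)%MS) -> \rank A = \rank B.
Proof.
move=> h; apply/eqP; rewrite eqn_leq !mxrankS //; apply/row_subP => i.
  by rewrite h row_sub.
by rewrite -h row_sub.
Qed.
Lemma row_cm_sub n (p p' : pred 'I_n) i : (p i -> p' i) -> (row i (Cm p) <= Cm p')%MS.
Proof.
move=> h; apply/cm_subP => j pj; rewrite row_cm; case: eqP => //= e; subst.
by case pi: (p j) => //; move: pj; rewrite h.
Qed.

Definition fpred d (U : seq (ecube d)) (F : ecube d -> Prop) : pred 'I_(size U) :=
  fun j => pb (F (cu U j)).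
Definition fpred1 d (U : seq (ecube d)) (F : ecube d -> Prop) k : pred 'I_(size U) :=
  fun j => pb (F (cu U j) /\ cube_dim (cu U j) = k).
Arguments fpred {d} U F.
Arguments fpred1 {d} U F k.

Lemma g_formula d (U : seq (ecube d)) (S T : rset d) (F : ecube d -> Prop) q :
  uniq U -> (forall Q, inS T Q -> Q \in U) ->
  (forall Q, inS T Q <-> inS S Q \/ F Q) -> (forall Q, F Q -> ~ inS S Q) ->
  (betv U T q)%:Z - (betv U S q)%:Z =
   (\rank (Zm U (prS U T q) *m Cm (fpred U F)))%:Z
   - (\rank (Cm (fpred1 U F q.+1) *m Dm U))%:Z
   + (\rank (Bm U (prS U S q.+1) :&: (Cm (fpred1 U F q.+1) *m Dm U)))%:Z.
Proof.
move=> uU hU hT hF.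
have hUS : forall Q, inS S Q -> Q \in U by move=> Q h; apply: hU; apply/hT; left.
set f := fpred U F; set f1 := fpred1 U F q.+1; set G := Cm f1 *m Dm U.
set ZT := Zm U (prS U T q); set ZS := Zm U (prS U S q).
set BT := Bm U (prS U T q.+1); set BS := Bm U (prS U S q.+1).
have BZT : (BT <= ZT)%MS by exact: BZ.
have BZS : (BS <= ZS)%MS by exact: BZ.
have eT : betv U T q = (\rank ZT - \rank BT)%N.
  by rewrite /betv -/ZT -/BT (capmx_idPr BZT).
have eS : betv U S q = (\rank ZS - \rank BS)%N.
  by rewrite /betv -/ZS -/BS (capmx_idPr BZS).
have lT := mxrankS BZT; have lS := mxrankS BZS.
have r1 : (\rank (ZT *m Cm f) + \rank ZS)%N = \rank ZT.
  rewrite -(mxrank_mul_ker ZT (Cm f)); congr (_ + _)%N.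
  apply: rank_by_rows => v; rewrite /ZS /ZT /Zm !sub_capmx.
  apply/idP/idP.
    move=> /andP [vs0 vk]; have vs := cm_subP _ _ vs0; rewrite vk andbT; apply/andP; split.
      apply/cm_subP => j tj; apply: vs => /=.
      apply: contra tj => /pbP [h1 h2]; apply/pbP; split => //; apply/hT; by left.
    apply/sub_kermxP; apply/rowP => j; rewrite mul_cm mxE.
    case fj: (f j); last by rewrite mulr0.
    rewrite vs ?mul0r //; apply/negP => /pbP [h1 _].
    by move/pbP: fj => /hF.
  move=> /andP [/andP [vt0 vk] vf]; have vt := cm_subP _ _ vt0; rewrite vk andbT; apply/cm_subP => j sj.
  case tj : (prS U T q j); last exact: (vt j (negbT tj)).
  have fj : f j.
    move/pbP: tj => [h1 h2]; apply/pbP; case: (proj1 (hT _) h1) => // h.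
    by move/negP: sj; case; apply/pbP.
  move/sub_kermxP: vf => /(congr1 (fun w : 'rV[rat]_(size U) => w 0 j)).
  by rewrite mul_cm fj mulr1 mxE.
have e : (Cm (prS U T q.+1) :=: Cm (prS U S q.+1) + Cm f1)%MS.
  apply/eqmxP; apply/andP; split.
    apply/row_subP => i.
    case si : (prS U S q.+1 i).
      by apply: submx_trans (addsmxSl _ _); apply: row_cm_sub; rewrite si.
    case fi : (f1 i).
      by apply: submx_trans (addsmxSr _ _); apply: row_cm_sub; rewrite fi.
    apply: submx_trans (addsmxSl _ _); apply: row_cm_sub => /pbP [h1 h2].
    case: (proj1 (hT _) h1) => h.
      by move: si; have -> // : prS U S q.+1 i by apply/pbP.
    by move: fi; have -> // : f1 i by apply/pbP.
  rewrite addsmx_sub !cmS // => j /pbP [h1 h2]; apply/pbP; split => //; apply/hT; by [left | right].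
have r2 : \rank BT = \rank (BS + G)%MS.
  by rewrite /BT /Bm (eqmxMr _ e) (addsmxMr _ _ _).
have r3 := mxrank_sum_cap BS G.
rewrite eT eS; lia.
Qed.
Lemma g_mono d (U : seq (ecube d)) (S T S' T' : rset d) (F : ecube d -> Prop) q :
  uniq U -> (forall Q, inS T Q -> Q \in U) -> (forall Q, inS T' Q -> Q \in U) ->
  (forall Q, inS T Q <-> inS S Q \/ F Q) -> (forall Q, F Q -> ~ inS S Q) ->
  (forall Q, inS T' Q <-> inS S' Q \/ F Q) -> (forall Q, F Q -> ~ inS S' Q) ->
  (forall Q, inS S Q -> inS S' Q) ->
  (betv U T q)%:Z - (betv U S q)%:Z <= (betv U T' q)%:Z - (betv U S' q)%:Z.
Proof.
move=> uU hU hU' hT hF hT' hF' hSS.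
rewrite (g_formula q uU hU hT hF) (g_formula q uU hU' hT' hF').
have a1 : (\rank (Zm U (prS U T q) *m Cm (fpred U F)) <=
           \rank (Zm U (prS U T' q) *m Cm (fpred U F)))%N.
  apply: mxrankS; apply: submxMr; apply: capmxS => //.
  apply: cmS => j /pbP [h1 h2]; apply/pbP; split => //.
  apply/hT'; case: (proj1 (hT _) h1) => h; [left; exact: hSS | by right].
have a2 : (\rank (Bm U (prS U S q.+1) :&: (Cm (fpred1 U F q.+1) *m Dm U)) <=
           \rank (Bm U (prS U S' q.+1) :&: (Cm (fpred1 U F q.+1) *m Dm U)))%N.
  apply: mxrankS; apply: capmxS => //; apply: submxMr.
  by apply: cmS => j /pbP [h1 h2]; apply/pbP; split => //; exact: hSS.
lia.
Qed.

Lemma rank_cm_bound d (U : seq (ecube d)) (p : pred 'I_(size U)) (LF : seq (ecube d)) :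
  uniq U -> (forall j, p j -> cu U j \in LF) -> (\rank (Cm p) <= size LF)%N.
Proof.
move=> uU h.
pose ML : 'M[rat]_(size LF, size U) :=
  \matrix_(k, j) ((index (nth (Q0 d) LF k) U == nat_of_ord j) : nat)%:R.
apply: leq_trans (rank_leq_row ML); apply: mxrankS; apply/row_subP => i.
case pi: (p i); last first.
  have -> : row i (Cm p) = 0 by apply/rowP => j; rewrite row_cm pi andbF mxE.
  exact: sub0mx.
have lt : (index (cu U i) LF < size LF)%N by rewrite index_mem h.
have -> : row i (Cm p) = row (Ordinal lt) ML.
  apply/rowP => j; rewrite row_cm pi andbT !mxE /= nth_index ?h //.
  by rewrite /cu index_uniq.
exact: row_sub.
Qed.

Lemma g_bound d (U : seq (ecube d)) (S T : rset d) (F : ecube d -> Prop) q LF :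
  uniq U -> (forall Q, inS T Q -> Q \in U) ->
  (forall Q, inS T Q <-> inS S Q \/ F Q) -> (forall Q, F Q -> ~ inS S Q) ->
  (forall Q, F Q -> Q \in LF) ->
  (betv U T q)%:Z - (betv U S q)%:Z <= (size LF)%:Z.
Proof.
move=> uU hU hT hF hL; rewrite (g_formula q uU hU hT hF).
have a1 := mxrankM_maxr (Zm U (prS U T q)) (Cm (fpred U F)).
have a2 : (\rank (Cm (fpred U F)) <= size LF)%N.
  by apply: rank_cm_bound => // j /pbP; exact: hL.
have a3 := mxrankS (capmxSr (Bm U (prS U S q.+1)) (Cm (fpred1 U F q.+1) *m Dm U)).
lia.
Qed.
Definition boxcubes d (x : 'I_d -> int) (m : nat) : seq (ecube d) :=
  undup [seq [ffun i => (x i - m%:Z + ((f i).1 : nat)%:Z, (f i).2)]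
        | f : {ffun 'I_d -> 'I_(m.*2).+1 * bool} <- enum {ffun 'I_d -> 'I_(m.*2).+1 * bool}].

Lemma boxcubes_uniq d (x : 'I_d -> int) m : uniq (boxcubes x m).
Proof. exact: undup_uniq. Qed.

Lemma boxcubes_mem d (x : 'I_d -> int) m Q : inS (box x m) Q -> Q \in boxcubes x m.
Proof.
move=> hQ.
have hc : forall i, x i - m%:Z <= (Q i).1 /\ (Q i).1 + ((Q i).2 : nat)%:Z <= x i + m%:Z.
  move=> i.
  have hlo : cube_pts Q (fun t => ((Q t).1)%:~R).
    by move=> t; rewrite /intv_pts; split => //; rewrite ler_int lerDl.
  have hhi : cube_pts Q (fun t => ((Q t).1 + ((Q t).2 : nat)%:Z)%:~R).
    by move=> t; rewrite /intv_pts; split => //; rewrite ler_int lerDl.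
  have [lo1 _] := hQ _ hlo i.
  have [_ hi2] := hQ _ hhi i.
  by rewrite !ler_int in lo1 hi2.
rewrite mem_undup; apply/mapP.
exists [ffun i => (inord (absz ((Q i).1 - (x i - m%:Z))%R) : 'I_(m.*2).+1, (Q i).2)].
  by rewrite mem_enum.
apply/ffunP => i; rewrite !ffunE /=.
have := hc i; case: (Q i) => l b /= [h1 h2].
rewrite inordK; last first.
  have hb : (0 <= (b : nat)%:Z) by [].
  rewrite ltnS -mul2n; lia.
congr pair; lia.
Qed.

Lemma box_sub_corners d (x x' : 'I_d -> int) (m m' : nat) :
  box x' m' (lattice_pt (fun i => x i - m%:Z)) -> box x' m' (lattice_pt (fun i => x i + m%:Z)) ->
  forall p, box x m p -> box x' m' p.
Proof.
move=> h1 h2 p hp i; have [a1 _] := h1 i; have [_ a2] := h2 i; have [b1 b2] := hp i.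
rewrite /lattice_pt in a1 a2.
split; [exact: le_trans a1 b1 | exact: le_trans b2 a2].
Qed.

Lemma F_in_box d (X W : rset d) (Mb : R) :
  (forall p, X p -> ~ W p -> forall i, `|p i| <= Mb) ->
  exists m0 : nat, forall Q, inS X Q -> ~ inS W Q -> inS (box (fun _ => 0) m0) Q.
Proof.
move=> hbound; exists (Num.Def.archi_bound (`|Mb| + 1)).
set m0 := Num.Def.archi_bound _.
have hm : `|Mb| + 1 < m0%:R :> R.
  by apply: archi_boundP; apply: addr_ge0 => //; exact: normr_ge0.
move=> Q hX hW.
have [p [hp hWp]] : exists p, cube_pts Q p /\ ~ W p.
  apply: NNPP => hn; apply: hW => y hy; apply: NNPP => hWy; apply: hn; by exists y.
have hb := hbound p (hX p hp) hWp.
move=> y hy i.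
have [p1 p2] := hp i; have [y1 y2] := hy i.
have hpi := hb i.
move: p1 p2 y1 y2; rewrite /intv_pts; case: (Q i) => l b /= p1 p2 y1 y2.
have e1 : (l + (b : nat)%:Z)%:~R <= l%:~R + 1 :> R.
  by rewrite intrD lerD2l; case: b {p2 y2}.
have e0 : l%:~R <= (l + (b : nat)%:Z)%:~R :> R.
  by rewrite ler_int lerDl.
have hMb : Mb <= `|Mb| by exact: ler_norm.
move: hpi; rewrite ler_norml => /andP [q1 q2].
rewrite sub0r add0r intrN -pmulrn.
split; lra.
Qed.
Lemma stab d q (X W : rset d) : (forall p, W p -> X p) ->
  (exists Mb : R, forall p, X p -> ~ W p -> forall i, `|p i| <= Mb) ->
  exists (x0 : 'I_d -> int) (m0 : nat) (c : int), forall x m,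
    (forall p, box x0 m0 p -> box x m p) ->
    (betv (boxcubes x m) (setI_r X (box x m)) q)%:Z
      - (betv (boxcubes x m) (setI_r W (box x m)) q)%:Z = c.
Proof.
move=> hWX [Mb hMb].
have [mK hK] := F_in_box hMb.
set K := box (fun _ : 'I_d => 0) mK.
pose F := fun Q => inS X Q /\ ~ inS W Q.
pose g x m := (betv (boxcubes x m) (setI_r X (box x m)) q)%:Z
      - (betv (boxcubes x m) (setI_r W (box x m)) q)%:Z.
pose LF := boxcubes (fun _ : 'I_d => 0) mK.
have hFL : forall Q, F Q -> Q \in LF by move=> Q [h1 h2]; apply: boxcubes_mem; exact: hK.
have hTU : forall x m Q, inS (setI_r X (box x m)) Q -> Q \in boxcubes x m.
  by move=> x m Q h; apply: boxcubes_mem => y hy; exact: (proj2 (h y hy)).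
have hWU : forall x m Q, inS (setI_r W (box x m)) Q -> Q \in boxcubes x m.
  by move=> x m Q h; apply: boxcubes_mem => y hy; exact: (proj2 (h y hy)).
have hT : forall x m, (forall p, K p -> box x m p) -> forall Q,
    inS (setI_r X (box x m)) Q <-> inS (setI_r W (box x m)) Q \/ F Q.
  move=> x m hKA Q; split.
    move=> h; case: (classic (inS W Q)) => hw.
      by left => y hy; split; [exact: hw y hy | exact: (proj2 (h y hy))].
    by right; split => // y hy; exact: (proj1 (h y hy)).
  case=> [h | [hx hw]] y hy.
    by split; [apply: hWX; exact: (proj1 (h y hy)) | exact: (proj2 (h y hy))].
  by split; [exact: hx | apply: hKA; exact: (hK Q hx hw y hy)].
have hF : forall x m Q, F Q -> ~ inS (setI_r W (box x m)) Q.
  by move=> x m Q [_ hw] h; apply: hw => y hy; exact: (proj1 (h y hy)).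
have gbound : forall x m, (forall p, K p -> box x m p) -> g x m <= (size LF)%:Z.
  move=> x m hKA; apply: g_bound.
  - exact: boxcubes_uniq.
  - exact: hTU.
  - exact: hT.
  - exact: hF.
  - exact: hFL.
have gmono : forall x m x' m', (forall p, K p -> box x m p) ->
    (forall p, box x m p -> box x' m' p) -> g x m <= g x' m'.
  move=> x m x' m' hKA hAA'.
  have hKA' : forall p, K p -> box x' m' p by move=> p /hKA /hAA'.
  have hU1 : forall Q, inS (setI_r X (box x m)) Q -> Q \in boxcubes x' m'.
    by move=> Q h; apply: boxcubes_mem => y hy; apply: hAA'; exact: (proj2 (h y hy)).
  have hU2 : forall Q, inS (setI_r W (box x m)) Q -> Q \in boxcubes x' m'.
    by move=> Q h; apply: boxcubes_mem => y hy; apply: hAA'; exact: (proj2 (h y hy)).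
  have e1 := betti_uniq (betti_rank q (boxcubes_uniq x m) (hTU x m))
                        (betti_rank q (boxcubes_uniq x' m') hU1).
  have e2 := betti_uniq (betti_rank q (boxcubes_uniq x m) (hWU x m))
                        (betti_rank q (boxcubes_uniq x' m') hU2).
  rewrite /g e1 e2; apply: g_mono.
  - exact: boxcubes_uniq.
  - exact: hU1.
  - exact: hTU.
  - exact: hT.
  - exact: hF.
  - exact: hT.
  - exact: hF.
  - by move=> Q h y hy; have [h1 h2] := h y hy; split => //; exact: hAA'.
pose P n := exists x m, (forall p, K p -> box x m p) /\ (size LF)%:Z - n%:Z <= g x m.
have hex : exists n, pb (P n).
  exists (absz ((size LF)%:Z - g (fun _ => 0) mK)); apply/pbP.
  exists (fun _ => 0), mK; split => //.
  rewrite abszE; move: (g _ mK) => b; move: (size LF)%:Z => a.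
  have := ler_norm (a - b); lia.
case: (ex_minnP hex) => n /pbP [xs0 [m0 [hK0 hg0]]] hmin.
have hmax : forall x m, (forall p, K p -> box x m p) -> g x m <= (size LF)%:Z - n%:Z.
  move=> x m hKA; case: (lerP (g x m) ((size LF)%:Z - n%:Z)) => // hlt; exfalso.
  have gb := gbound x m hKA.
  case: n hmin hg0 hlt => [|n'] hmin hg0 hlt; first lia.
  have : pb (P n') by apply/pbP; exists x, m; split => //; lia.
  by move/hmin; rewrite ltnn.
exists xs0, m0, (g xs0 m0) => x m hA.
have hKA : forall p, K p -> box x m p by move=> p /hK0 /hA.
apply/eqP; rewrite eq_le; apply/andP; split.
  exact: le_trans (hmax x m hKA) hg0.
exact: gmono hK0 hA.
Qed.
Unset Implicit Arguments.

Theorem proposition4p2 (d q : nat) (X Y : rset d) :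
  (q < d)%N -> cubical X -> cubical Y -> bounded_set (symdiff X Y) ->
  exists Delta : int,
    forall (xs : nat -> 'I_d -> int) (ms : nat -> nat),
      (forall z : 'I_d -> int, exists N : nat, forall n : nat, (N <= n)%N ->
         box (xs n) (ms n) (lattice_pt z)) ->
      exists n0 : nat, forall n : nat, (n0 <= n)%N ->
        exists bX bY : nat,
          is_betti (setI_r X (box (xs n) (ms n))) q bX /\
          is_betti (setI_r Y (box (xs n) (ms n))) q bY /\
          bX%:Z - bY%:Z = Delta.
Proof.
move=> _ _ _ [Mb hMb].
pose W := setI_r X Y.
have [x1 [m1 [c1 h1]]] : exists (x0 : 'I_d -> int) (m0 : nat) (c : int), forall x m,
    (forall p, box x0 m0 p -> box x m p) ->
    (betv (boxcubes x m) (setI_r X (box x m)) q)%:Z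
      - (betv (boxcubes x m) (setI_r W (box x m)) q)%:Z = c.
  apply: stab; first by move=> p [].
  exists Mb => p hx hw i; apply: hMb; left; split => // hy; exact: hw.
have [x2 [m2 [c2 h2]]] : exists (x0 : 'I_d -> int) (m0 : nat) (c : int), forall x m,
    (forall p, box x0 m0 p -> box x m p) ->
    (betv (boxcubes x m) (setI_r Y (box x m)) q)%:Z
      - (betv (boxcubes x m) (setI_r W (box x m)) q)%:Z = c.
  apply: stab; first by move=> p [].
  exists Mb => p hy hw i; apply: hMb; right; split => // hx; exact: hw.
exists (c1 - c2) => xs ms hlim.
have [N1 hN1] := hlim (fun i => x1 i - m1%:Z).
have [N2 hN2] := hlim (fun i => x1 i + m1%:Z).
have [N3 hN3] := hlim (fun i => x2 i - m2%:Z).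
have [N4 hN4] := hlim (fun i => x2 i + m2%:Z).
exists (maxn (maxn N1 N2) (maxn N3 N4)) => n hn.
have hb1 : forall p, box x1 m1 p -> box (xs n) (ms n) p.
  by apply: box_sub_corners; [apply: hN1 | apply: hN2]; lia.
have hb2 : forall p, box x2 m2 p -> box (xs n) (ms n) p.
  by apply: box_sub_corners; [apply: hN3 | apply: hN4]; lia.
exists (betv (boxcubes (xs n) (ms n)) (setI_r X (box (xs n) (ms n))) q).
exists (betv (boxcubes (xs n) (ms n)) (setI_r Y (box (xs n) (ms n))) q).
split.
  apply: betti_rank; first exact: boxcubes_uniq.
  by move=> Q h; apply: boxcubes_mem => y hy; exact: (proj2 (h y hy)).
split.
  apply: betti_rank; first exact: boxcubes_uniq.
  by move=> Q h; apply: boxcubes_mem => y hy; exact: (proj2 (h y hy)).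
have := h1 _ _ hb1; have := h2 _ _ hb2; lia.
Qed.
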